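(* Let $q$ be a prime power and $k\ge3$, $u$, $h\ge1$ integers with $q\ge u\ge 2$. Let $U_1,\dots,U_h$ be $u$-dimensional subspaces of $\mathbf F_q^k$ with $U_i\cap U_j=\{0\}$ for $i\ne j$, and assume $q^k-q^{k-1}>h(q^u-1)$. Let $U$ be the set of nonzero vectors of $\mathbf F_q^k$ not in $U_1\cup\dots\cup U_h$, let $\widetilde G$ be a matrix whose columns consist of exactly one representative of each class $\{\lambda\mathbf v:\lambda\in\mathbf F_q^*\}$, $\mathbf v\in U$, and let $\mathbf C$ be the linear code with generator matrix $\widetilde G$, with parameters $\big[\frac{(q^k-1)-h(q^u-1)}{q-1},k,d=q^{k-1}-hq^{u-1}\big]_q$. If $h\le uq$, then $\mathbf C$ is distance optimal. In particular, if $u=2$ and $h\le 2q$, then $\mathbf C$ is distance optimal.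
   Context: A linear $[n,k,d]_q$ code is distance optimal if no linear $[n,k,d+1]_q$ code exists. *)

(* Defs.v *)
From HB Require Import structures.
From mathcomp Require Import all_boot all_order all_algebra.
Set Implicit Arguments. Unset Strict Implicit. Unset Printing Implicit Defensive.
Import GRing.Theory.
Local Open Scope ring_scope.

(* Linear codes over a finite field F are represented by generator matrices:
   the code generated by C : 'M[F]_(m,n) is the row space of C, a word
   x : 'rV_n belongs to it iff (x <= C)%MS, and its dimension is \rank C. *)

Definition wt (F : finFieldType) (n : nat) (x : 'rV[F]_n) : nat :=
  #|[set i : 'I_n | x 0 i != 0]|.

Definition is_min_dist (F : finFieldType) (m n : nat) (C : 'M[F]_(m, n)) (d : nat) : Prop :=
  (exists x : 'rV[F]_n, [/\ (x <= C)%MS, x != 0 & wt x = d]) /\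
  (forall x : 'rV[F]_n, (x <= C)%MS -> x != 0 -> (d <= wt x)%N).

Definition exists_code (F : finFieldType) (n k d : nat) : Prop :=
  exists C : 'M[F]_(k, n), \rank C = k /\ is_min_dist C d.

Definition distance_optimal (F : finFieldType) (m n : nat) (C : 'M[F]_(m, n)) : Prop :=
  forall d : nat, is_min_dist C d -> ~ exists_code F n (\rank C) d.+1.

(* Main.v *)
Require Import Defs.
From mathcomp Require Import all_boot all_order all_algebra.
From mathcomp Require Import zify ring.
Import GRing.Theory.
Local Open Scope ring_scope.
Set Implicit Arguments. Unset Strict Implicit. Unset Printing Implicit Defensive.


Definition cdiv (e q : nat) : nat := ((e + q.-1) %/ q)%N.

Lemma cdiv_leq (e q w : nat) : (0 < q)%N -> (cdiv e q <= w)%N = (e <= q * w)%N.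
Proof.
move=> q0; rewrite /cdiv -ltnS ltn_divLR //.
apply/idP/idP; lia.
Qed.

Fixpoint gr (q K e : nat) : nat :=
  if K is K'.+1 then (e + gr q K' (cdiv e q))%N else 0%N.

Definition wtT (F : finFieldType) (n : nat) (T : {set 'I_n}) (x : 'rV[F]_n) : nat :=
  #|[set j in T | x 0 j != 0]|.

Lemma pigeon (F : finFieldType) (n : nat) (S : {set 'I_n}) (f : 'I_n -> F) :
  exists l : F, (#|S| <= #|F| * #|[set j in S | f j == l]|)%N.
Proof.
have [l Hl|H] := pickP (fun l : F => (#|S| <= #|F| * #|[set j in S | f j == l]|)%N).
  by exists l.
have E : #|S| = (\sum_(l : F) #|[set j in S | f j == l]|)%N.
  rewrite -sum1_card (partition_big f xpredT) //=.
  apply: eq_bigr => l _; rewrite -sum1_card; apply: eq_bigl => j.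
  by rewrite inE.
have : (\sum_(l : F) (#|F| * #|[set j in S | f j == l]|).+1 <= \sum_(l : F) #|S|)%N.
  by apply: leq_sum => l _; rewrite ltnNge (H l).
under eq_bigr do rewrite -addn1.
rewrite big_split /= !sum_nat_const -big_distrr /= -E cardT -cardE => h.
have : (0 < #|F|)%N by apply/card_gt0P; exists 0.
move: h => h1 h2; exfalso; move: h1; rewrite -[X in (_ <= X)%N]addn0 leq_add2l muln1 leqn0 => /eqP E0; by move: h2; rewrite E0.
Qed.

Lemma griesmer (F : finFieldType) (n K : nat) : forall m (V : 'M[F]_(m, n))
  (T : {set 'I_n}) (e : nat), \rank V = K ->
  (forall x : 'rV_n, (x <= V)%MS -> x != 0 -> (e <= wtT T x)%N) ->
  (gr #|F| K e <= #|T|)%N.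
Proof.
have q0 : (0 < #|F|)%N by apply/card_gt0P; exists 0.
elim: K => [//|K IH] m V T e rV H /=.
have V0 : V != 0 by rewrite -mxrank_eq0 rV.
have P0 : (nz_row V <= V)%MS && (nz_row V != 0) by rewrite nz_row_sub nz_row_eq0.
case: (@arg_minnP _ _ (fun x : 'rV[F]_n => (x <= V)%MS && (x != 0)) (wtT T) P0) => c /andP[cV c0] cmin.
set S := [set j in T | c 0 j != 0].
have ST : S \subset T by apply/subsetP => j; rewrite inE => /andP[].
have eS : (e <= #|S|)%N by exact: H.
have rW : \rank (V :\: c)%MS = K.
  have := mxrank_cap_compl V c.
  rewrite (capmx_idPr cV) rank_rV c0 rV. lia.
have := IH _ (V :\: c)%MS (T :\: S) (cdiv e #|F|) rW.
have -> : #|T| = (#|S| + #|T :\: S|)%N.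
  by rewrite -(cardsID S T) (setIidPr ST).
move=> Hr; apply: leq_add => //; apply: Hr => x xW x0.
have [l Hl] := pigeon S (fun j => x 0 j / c 0 j).
set A := [set j in S | x 0 j / c 0 j == l] in Hl.
have yV : (x - l *: c <= V)%MS.
  rewrite addmx_sub //; first exact: (submx_trans xW (diffmxSl _ _)).
  by rewrite eqmx_opp scalemx_sub.
have y0 : x - l *: c != 0.
  apply: contra x0; rewrite subr_eq0 => /eqP xe.
  have : (x <= (V :\: c) :&: c)%MS by rewrite sub_capmx xW xe scalemx_sub.
  by rewrite capmx_diff submx0.
have c1 := cmin _ (introT andP (conj yV y0)).
have inc : [set j in T | (x - l *: c) 0 j != 0] \subset
           [set j in T :\: S | x 0 j != 0] :|: (S :\: A).
  apply/subsetP => j; rewrite !inE !mxE => /andP[jT].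
  case: (boolP (c 0 j != 0)) => cj /=.
    rewrite jT /= andbT; apply: contra => /eqP <-; by rewrite mulfVK // subrr.
  move=> h; apply/orP; left; rewrite jT andbF /=; move: h.
  by rewrite negbK in cj; rewrite (eqP cj) mulr0 subr0.
have c2 := subset_leq_card inc.
have c3 := (leq_card_setU [set j in T :\: S | x 0 j != 0] (S :\: A)).1.
have AS : A \subset S by apply/subsetP => j; rewrite inE => /andP[].
have c4 : #|S :\: A| = (#|S| - #|A|)%N by rewrite cardsD (setIidPr AS).
have c5 : (#|A| <= #|S|)%N by exact: subset_leq_card.
rewrite cdiv_leq //.
have wc : wtT T c = #|S| by [].
rewrite /wtT in c1 wc c2 * ; rewrite c4 in c3.
have Hq : (#|F| * #|A| <= #|F| * wtT (T :\: S) x)%N.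
  apply: leq_mul => //. rewrite /wtT. move: c1 c2 c3 c5; rewrite wc => h1 h2 h3 h4. have h := leq_trans h1 (leq_trans h2 h3). rewrite addnBA // leq_subRL ?(leq_trans h4 (leq_addl _ _)) // leq_add2r in h; exact: h.
rewrite /wtT in Hq; lia.
Qed.

Local Open Scope nat_scope.

Lemma gr_mono (q K : nat) : (0 < q)%N -> forall e1 e2, (e1 <= e2)%N -> (gr q K e1 <= gr q K e2)%N.
Proof.
move=> q0; elim: K => [//|K IH] e1 e2 le /=.
apply: leq_add => //; apply: IH; rewrite /cdiv leq_div2r // leq_add2r //.
Qed.

Lemma cdiv_exact (q a : nat) : (0 < q)%N -> cdiv (q * a + 1) q = (a + 1)%N.
Proof.
move=> q0; rewrite /cdiv.
have -> : (q * a + 1 + q.-1 = q * (a + 1))%N by rewrite mulnDr muln1; lia.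
by rewrite mulKn.
Qed.

Lemma grL1 (q K a : nat) : (2 <= q)%N -> forall j,
  ((q - 1) * gr q (j + K) (q ^ j * a + 1) =
   a * q * (q ^ j - 1) + (q - 1) * j + (q - 1) * gr q K (a + 1))%N.
Proof.
move=> q2; elim=> [|j IH]; first by rewrite expn0 mul1n subnn !muln0.
rewrite addSn /= expnS -mulnA cdiv_exact; last lia.
rewrite mulnDr IH.
have : (1 <= q ^ j)%N by rewrite expn_gt0; lia.
move: (q ^ j) (gr q K (a + 1)) => X Y X1. have [p ->] : exists p, q = p.+1 by exists q.-1; lia. have [Z ->] : exists Z, X = Z.+1 by exists X.-1; lia. have E : (p.+1 * Z.+1 - 1 = p.+1 * Z + p)%N by rewrite mulnS; lia. rewrite E !subSS !subn0. ring.
Qed.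

Lemma grL2 (q : nat) : (2 <= q)%N -> forall K b t, (t < q)%N -> (q ^ K <= b + t)%N ->
  (q ^ K.+1 <= (q - 1) * (t + 1 + gr q K.+1 b))%N.
Proof.
move=> q2; elim=> [|K IH] b t tq hb.
  rewrite /= expn1 expn0 in hb *. nia.
have hb' : (q ^ K <= cdiv b q + 0)%N.
  rewrite addn0 leqNgt; apply/negP => hlt.
  have : (cdiv b q <= (q ^ K).-1)%N by rewrite -ltnS prednK // expn_gt0; lia.
  rewrite cdiv_leq; last lia.
  move: hb hlt; rewrite (expnS q K).
  have : (1 <= q ^ K)%N by rewrite expn_gt0; lia.
  move: (q ^ K) => X X1. nia.
have := IH (cdiv b q) 0%N (ltnW q2) hb'.
rewrite [gr q K.+2 b]/= (expnS q K.+1).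
rewrite /=. move: (q ^ K.+1) (cdiv b q) (gr q K (cdiv (cdiv b q) q)) hb => X Y Z hb. have [p ->] : exists p, q = p.+1 by exists q.-1; lia. rewrite subSS subn0. nia.
Qed.

Local Open Scope ring_scope.

Lemma card_disj (T : finType) (h : nat) (Z : 'I_h -> {set T}) :
  (forall i j, i != j -> [disjoint Z i & Z j]) ->
  #|\bigcup_i Z i| = (\sum_i #|Z i|)%N.
Proof.
move=> dZ; rewrite -sum1_card (partition_disjoint_bigcup _ _ dZ).
by apply: eq_bigr => i _; rewrite sum1_card.
Qed.

Lemma card_sub (F : finFieldType) (k m : nat) (M : 'M[F]_(m, k)) :
  #|[set v : 'rV[F]_k | (v <= M)%MS]| = (#|F| ^ \rank M)%N.
Proof.
have -> : [set v : 'rV[F]_k | (v <= M)%MS] =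
          [set z *m row_base M | z in [set: 'rV[F]_(\rank M)]].
  apply/setP => v; rewrite inE; apply/idP/imsetP.
    move=> vM; have : (v <= row_base M)%MS by rewrite eq_row_base.
    by case/submxP => z ->; exists z; rewrite ?inE.
  by case=> z _ ->; rewrite -(eq_row_base M) submxMl.
rewrite card_imset; last exact: row_free_inj (row_base_free M).
by rewrite cardsT card_mx mul1n.
Qed.

Lemma mx11_eq0 (F : fieldType) (A : 'M[F]_1) : (A == 0) = (A 0 0 == 0).
Proof.
apply/eqP/eqP => [->|h]; first by rewrite mxE.
by apply/matrixP => i j; rewrite !ord1 h mxE.
Qed.

Lemma weight_bound (F : finFieldType) (k u h n : nat) (hk : (0 < k)%N)
  (Us : 'I_h -> 'M[F]_(u, k))
  (hrank : forall i, \rank (Us i) = u)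
  (hdisj : forall i j, i != j -> \rank (Us i :&: Us j)%MS = 0%N)
  (G : 'M[F]_(k, n))
  (hreps : forall v : 'rV[F]_k,
      v != 0 -> (forall i, ~~ (v <= Us i)%MS) ->
      exists! j : 'I_n, exists lambda : F, lambda != 0 /\ (col j G)^T = lambda *: v)
  (x : 'rV[F]_k) (x0 : x != 0) :
  ((#|F| ^ k - #|F| ^ k.-1) - h * (#|F| ^ u - #|F| ^ u.-1) <= (#|F| - 1) * wt (x *m G))%N.
Proof.
have q0 : (0 < #|F|)%N by apply/card_gt0P; exists 0.
pose dot (v : 'rV[F]_k) := (v *m x^T) 0 0.
have kerE : forall v, (v <= kermx x^T)%MS = (dot v == 0).
  by move=> v; rewrite sub_kermx mx11_eq0.
pose K := [set v : 'rV[F]_k | (v <= kermx x^T)%MS].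
pose N1 := [set v : 'rV[F]_k | dot v != 0].
have cK : #|K| = (#|F| ^ k.-1)%N.
  by rewrite card_sub mxrank_ker mxrank_tr rank_rV x0 subn1.
have cN1 : #|N1| = (#|F| ^ k - #|F| ^ k.-1)%N.
  have -> : N1 = ~: K by apply/setP => v; rewrite !inE kerE.
  have := cardsC K; rewrite cK cardT -cardE card_mx mul1n. move=> <-; by rewrite addKn.
pose B i := [set v : 'rV[F]_k | (v <= Us i)%MS && (dot v != 0)].
have cB : forall i, (#|B i| <= #|F| ^ u - #|F| ^ u.-1)%N.
  move=> i.
  have -> : B i = [set v : 'rV[F]_k | (v <= Us i)%MS] :\: K.
    by apply/setP => v; rewrite !inE kerE andbC.
  rewrite cardsD card_sub hrank.
  have -> : [set v : 'rV[F]_k | (v <= Us i)%MS] :&: K =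
            [set v : 'rV[F]_k | (v <= Us i :&: kermx x^T)%MS].
    by apply/setP => v; rewrite !inE sub_capmx.
  rewrite card_sub; apply: leq_sub2l; apply: leq_pexp2l => //.
  have := mxrank_sum_cap (Us i) (kermx x^T).
  have := rank_leq_col (Us i + kermx x^T)%MS.
  rewrite hrank mxrank_ker mxrank_tr rank_rV x0 /=. lia.
have dB : forall i j, i != j -> [disjoint B i & B j].
  move=> i j ij; rewrite disjoints_subset; apply/subsetP => v; rewrite !inE => /andP[vi dv]; apply/negP => /andP[vj _].
  have : (v <= Us i :&: Us j)%MS by rewrite sub_capmx vi vj.
  have /eqP -> : (Us i :&: Us j)%MS == 0 by rewrite -mxrank_eq0 hdisj.
  rewrite submx0 => /eqP v0; move: dv; by rewrite v0 /dot mul0mx mxE eqxx.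
pose S := [set v : 'rV[F]_k | (dot v != 0) && [forall i, ~~ (v <= Us i)%MS]].
have sub1 : N1 \subset S :|: \bigcup_i B i.
  apply/subsetP => v; rewrite !inE => dv; rewrite dv /=.
  case: (boolP [forall i, ~~ (v <= Us i)%MS]) => //= /forallPn [i]; rewrite negbK => vi.
  by apply/bigcupP; exists i => //; rewrite inE vi dv.
have c1 : (#|N1| <= #|S| + h * (#|F| ^ u - #|F| ^ u.-1))%N.
  apply: leq_trans (subset_leq_card sub1) _.
  apply: leq_trans (leq_card_setU _ _).1 _. rewrite card_disj //. apply: leq_add => //.
  rewrite -[X in (X * _)%N]card_ord -sum_nat_const; apply: leq_sum => i _; exact: cB.
pose D := setX [set l : F | l != 0] [set j : 'I_n | (x *m G) 0 j != 0].
pose f (p : F * 'I_n) := p.1^-1 *: ((col p.2 G)^T).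
have sub2 : S \subset f @: D.
  apply/subsetP => v; rewrite inE => /andP[dv /forallP nv].
  have v0 : v != 0 by apply: contra dv => /eqP ->; rewrite /dot mul0mx mxE.
  have [j [[l [l0 hl]] _]] := hreps v v0 nv.
  apply/imsetP; exists (l, j).
    rewrite !inE l0 /=.
    have -> : (x *m G) 0 j = l * dot v.
      rewrite /dot !mxE mulr_sumr; apply: eq_bigr => a _.
      have : (col j G)^T 0 a = (l *: v) 0 a by rewrite hl.
      rewrite !mxE => ->. ring.
    by rewrite mulf_neq0.
  by rewrite /f /= hl scalerA mulVf // scale1r.
have c2 : (#|S| <= (#|F| - 1) * wt (x *m G))%N.
  apply: leq_trans (subset_leq_card sub2) _; apply: leq_trans (leq_imset_card _ _) _.
  rewrite cardsX.
  have -> : #|[set l : F | l != 0]| = (#|F| - 1)%N.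
    have -> : [set l : F | l != 0] = [set~ 0] by apply/setP => l; rewrite !inE.
    by rewrite cardsC1 subn1.
  by [].
move: c1 c2; rewrite cN1. lia.
Qed.

Lemma col_count (F : finFieldType) (k u h n : nat)
  (Us : 'I_h -> 'M[F]_(u, k))
  (hrank : forall i, \rank (Us i) = u)
  (hdisj : forall i j, i != j -> \rank (Us i :&: Us j)%MS = 0%N)
  (G : 'M[F]_(k, n))
  (hcols : forall j : 'I_n,
      (col j G)^T != 0 /\ forall i, ~~ ((col j G)^T <= Us i)%MS)
  (hreps : forall v : 'rV[F]_k,
      v != 0 -> (forall i, ~~ (v <= Us i)%MS) ->
      exists! j : 'I_n, exists lambda : F, lambda != 0 /\ (col j G)^T = lambda *: v) :
  ((#|F| - 1) * n + h * (#|F| ^ u - 1) + 1 <= #|F| ^ k)%N.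
Proof.
pose Tset := [set v : 'rV[F]_k | (v != 0) && [forall i, ~~ (v <= Us i)%MS]].
pose Z i := [set v : 'rV[F]_k | (v <= Us i)%MS && (v != 0)].
have cZ : forall i, #|Z i| = (#|F| ^ u - 1)%N.
  move=> i; rewrite -(hrank i) -card_sub (cardsD1 0 [set v : 'rV[F]_k | (v <= Us i)%MS]).
  rewrite inE sub0mx /= add1n subSS subn0; apply: eq_card => v.
  by rewrite !inE andbC.
have dZ : forall i j, i != j -> [disjoint Z i & Z j].
  move=> i j ij; rewrite disjoints_subset; apply/subsetP => v; rewrite !inE => /andP[vi v0]; apply/negP => /andP[vj _].
  have : (v <= Us i :&: Us j)%MS by rewrite sub_capmx vi vj.
  have /eqP -> : (Us i :&: Us j)%MS == 0 by rewrite -mxrank_eq0 hdisj.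
  by rewrite submx0; apply/negP.
have dTZ : [disjoint Tset & \bigcup_i Z i].
  rewrite disjoints_subset; apply/subsetP => v; rewrite !inE => /andP[_ /forallP nv].
  apply/negP => /bigcupP [i _]; rewrite inE => /andP[vi _].
  by move: (nv i); rewrite vi.
have sTZ : Tset :|: \bigcup_i Z i \subset [set~ 0].
  apply/subsetP => v; rewrite !inE => /orP[/andP[] //|/bigcupP [i _]].
  by rewrite inE => /andP[].
have cU : (#|Tset| + h * (#|F| ^ u - 1) + 1 <= #|F| ^ k)%N.
  have := subset_leq_card sTZ.
  have [_] := leq_card_setU Tset (\bigcup_i Z i); rewrite dTZ => /eqP ->.
  rewrite cardsC1 card_disj // card_mx mul1n.
  under eq_bigr do rewrite cZ.
  rewrite sum_nat_const card_ord.
  have : (0 < #|F| ^ k)%N by rewrite expn_gt0; apply/orP; left; apply/card_gt0P; exists 0.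
  move=> h0 h1; rewrite addn1 -(prednK h0) ltnS; exact: h1.
pose D := [set p : F * 'I_n | p.1 != 0].
pose f (p : F * 'I_n) := p.1 *: ((col p.2 G)^T).
have cD : #|D| = ((#|F| - 1) * n)%N.
  have -> : D = setX [set~ 0] [set: 'I_n] by apply/setP => -[l j]; rewrite !inE andbT.
  by rewrite cardsX cardsC1 cardsT card_ord subn1.
have injf : {in D &, injective f}.
  move=> [l1 j1] [l2 j2]; rewrite !inE /f /= => l10 l20 e.
  have [c0 nc] := hcols j1.
  have [j [_ uj]] := hreps _ c0 nc.
  have ej1 : j = j1 by apply: uj; exists 1; rewrite oner_neq0 scale1r.
  have ej2 : j = j2.
    apply: uj; exists (l1 / l2); split; first by rewrite mulf_neq0 ?invr_eq0.
    by rewrite mulrC -scalerA e scalerA mulVf // scale1r.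
  subst j1 j2; congr (_, _).
  move/eqP: e; rewrite -subr_eq0 -scalerBl scaler_eq0 (negbTE c0) orbF subr_eq0.
  by move/eqP.
have sfT : f @: D \subset Tset.
  apply/subsetP => _ /imsetP [[l j] lD ->]; move: lD; rewrite !inE /f /= => l0.
  have [c0 nc] := hcols j.
  rewrite scaler_eq0 negb_or l0 c0 /=; apply/forallP => i.
  by rewrite eqmx_scale.
have := subset_leq_card sfT; rewrite card_in_imset // cD.
move: cU; lia.
Qed.
Local Open Scope nat_scope.

Lemma wt_arith (q v m h w : nat) : (2 <= q)%N ->
  (q ^ (v + m).+1 - q ^ (v + m) - h * (q ^ v.+1 - q ^ v) <= (q - 1) * w)%N ->
  (q ^ v * (q ^ m - h) <= w)%N.
Proof.
move=> q2; rewrite !expnS expnD.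
move: (q ^ v) (q ^ m) => Y M.
have [p ->] : exists p, q = p.+2 by exists (q - 2); lia.
move=> H.
have E : (p.+2 * (Y * M) - Y * M - h * (p.+2 * Y - Y) = p.+1 * (Y * (M - h)))%N.
  have [hM|hM] := leqP h M.
    have [c ->] : exists c, M = h + c by exists (M - h); lia.
    rewrite addKn; nia.
  have -> : (M - h = 0)%N by lia.
  rewrite muln0 muln0.
  have : (Y * M <= Y * h)%N by apply: leq_mul => //; lia.
  nia.
rewrite E in H; move: H; rewrite subSS subn0 leq_pmul2l //.
Qed.

Lemma hM_arith (q v m h : nat) : (2 <= q)%N ->
  (h * (q ^ v.+1 - 1) < q ^ (v + m).+1 - q ^ (v + m))%N -> (h < q ^ m)%N.
Proof.
move=> q2 hc.
have Y1 : (1 <= q ^ v)%N by rewrite expn_gt0; lia.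
move: hc; rewrite !expnS expnD; move: (q ^ v) (q ^ m) Y1 => Y M Y1.
have [p ->] : exists p, q = p.+2 by exists (q - 2); lia.
move=> hc; rewrite ltnNge; apply/negP => hM.
have : (Y * M <= Y * h)%N by apply: leq_mul.
nia.
Qed.

Lemma final_arith (q v m h n : nat) : (2 <= q)%N -> (v < q)%N -> (1 <= h)%N ->
  (h <= v.+1 * q)%N ->
  (h * (q ^ v.+1 - 1) < q ^ (v + m).+1 - q ^ (v + m))%N ->
  ((q - 1) * n + h * (q ^ v.+1 - 1) + 1 <= q ^ (v + m).+1)%N ->
  (gr q (v + m).+1 (q ^ v * (q ^ m - h) + 1) <= n)%N -> False.
Proof.
move=> q2 vq h1 hvq hc hn hg.
have Y1 : (1 <= q ^ v)%N by rewrite expn_gt0; lia.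
have hM : (h < q ^ m)%N.
  move: hc; rewrite !expnS expnD; move: (q ^ v) (q ^ m) Y1 => Y M Y1.
  have [p ->] : exists p, q = p.+2 by exists (q - 2); lia.
  move=> hc; rewrite ltnNge; apply/negP => hM.
  have : (Y * M <= Y * h)%N by apply: leq_mul.
  nia.
case: m hM hc hn hg => [|m'] hM hc hn hg.
  by rewrite expn0 in hM; lia.
set a := (q ^ m'.+1 - h)%N.
have a1 : (1 <= a)%N by rewrite /a; lia.
have L1 := grL1 m'.+2 a q2 v.
rewrite addnS in L1.
set b := cdiv (a + 1) q.
have L1' : gr q m'.+2 (a + 1) = (a + 1 + gr q m'.+1 b)%N by [].
have qb : (a + 1 <= q * b)%N by rewrite -cdiv_leq; lia.
have hb : (q ^ m' <= b + v)%N.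
  move: qb a1 hvq; rewrite /a expnS; move: (q ^ m') => X.
  have [p ->] : exists p, q = p.+2 by exists (q - 2); lia.
  move=> qb a1 hvq; rewrite leqNgt; apply/negP => hX. have : (p.+2 * (b + v) < p.+2 * X)%N by rewrite ltn_pmul2l. nia.
have L2 := grL2 q2 vq hb.
have hg' : ((q - 1) * gr q (v + m'.+1).+1 (q ^ v * a + 1) <= (q - 1) * n)%N.
  by apply: leq_mul.
rewrite L1 L1' in hg'.
move: hg' L2 hn hM a1; rewrite /a !expnS expnD !expnS.
move: (q ^ v) (q ^ m') (gr q m'.+1 b) Y1 => Y X Gp Y1.
have [p ->] : exists p, q = p.+2 by exists (q - 2); lia.
move=> H1 H2 H3 hM _.
have [c e] : exists c, (p.+2 * X = c + h)%N by exists (p.+2 * X - h); lia.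
rewrite e in H1 H2 H3; rewrite addnK in H1.
have [Y' eY] : exists Y', Y = Y'.+1 by exists Y.-1; lia.
rewrite eY in H1 H3; rewrite subSS subn0 in H1 H2 H3 *.
move: H1 H2 H3. lia.
Qed.
Local Open Scope ring_scope.
Unset Implicit Arguments. Set Strict Implicit. Set Printing Implicit Defensive.

Theorem corollary2p1 (F : finFieldType) (q k u h n : nat)
  (hq : #|F| = q) (hk : (3 <= k)%N) (hu2 : (2 <= u)%N) (huq : (u <= q)%N)
  (hh1 : (1 <= h)%N)
  (Us : 'I_h -> 'M[F]_(u, k))
  (hrank : forall i, \rank (Us i) = u)
  (hdisj : forall i j, i != j -> \rank (Us i :&: Us j)%MS = 0%N)
  (hcount : (h * (q ^ u - 1) < q ^ k - q ^ k.-1)%N)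
  (G : 'M[F]_(k, n))
  (hcols : forall j : 'I_n,
      (col j G)^T != 0 /\ forall i, ~~ ((col j G)^T <= Us i)%MS)
  (hreps : forall v : 'rV[F]_k,
      v != 0 -> (forall i, ~~ (v <= Us i)%MS) ->
      exists! j : 'I_n, exists lambda : F, lambda != 0 /\ (col j G)^T = lambda *: v)
  (hhu : (h <= u * q)%N) :
  distance_optimal G.
Proof.
move=> d [[y [yG y0 wy]] _] [C [rC [_ HC]]].
subst q.
have q2 : (2 <= #|F|)%N by lia.
have uk : (u <= k)%N by have := rank_leq_col (Us (Ordinal hh1)); rewrite hrank.
have hn := col_count hrank hdisj hcols hreps.
have [v ev] : exists v, u = v.+1 by exists u.-1; lia.
subst u.
have [m em] : exists m, k = (v + m).+1 by exists (k - v.+1)%N; lia.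
subst k.
have wtB : forall x : 'rV[F]_(v + m).+1, x != 0 ->
    (#|F| ^ v * (#|F| ^ m - h) <= wt (x *m G))%N.
  move=> x x0; apply: wt_arith => //.
  exact: (weight_bound (ltn0Sn _) hrank hdisj hreps x0).
have hM := hM_arith q2 hcount.
have D1 : (0 < #|F| ^ v * (#|F| ^ m - h))%N.
  rewrite muln_gt0 expn_gt0; apply/andP; split; lia.
have wt0 : forall l, wt (0 : 'rV[F]_l) = 0%N.
  by move=> l; rewrite /wt; apply/eqP; rewrite cards_eq0; apply/eqP/setP => i; rewrite !inE mxE eqxx.
have rG : \rank G = (v + m).+1.
  have : row_free G.
    rewrite -kermx_eq0; apply/negPn/negP => nz.
    have x0 : nz_row (kermx G) != 0 by rewrite nz_row_eq0.
    have := wtB _ x0; rewrite (sub_kermxP (nz_row_sub _)) wt0; lia.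
  by move/eqP.
have dB : (#|F| ^ v * (#|F| ^ m - h) <= d)%N.
  move/submxP: yG => [z yz]; rewrite -wy yz; apply: wtB.
  by apply: contra y0 => /eqP z0; rewrite yz z0 mul0mx.
have g := @griesmer F n _ _ C setT d.+1 rC.
have g' : (gr #|F| (v + m).+1 d.+1 <= n)%N.
  rewrite -rG; apply: leq_trans (g _) _; last by rewrite cardsT card_ord.
  move=> x xC x0.
  have -> : wtT setT x = wt x by rewrite /wtT /wt; apply: eq_card => i; rewrite !inE.
  exact: HC.
apply: (final_arith q2 _ hh1 _ hcount hn).
- lia.
- exact: hhu.
apply: leq_trans g'; apply: gr_mono; lia.
Qed.
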